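(* For every $t\ge0$ and every color $c$ that EB-1WL can assign after $t$ rounds, there is a $\mathrm{CFOC}^3$ formula $\phi_c(x,y)$ of quantifier depth $t$ such that for every graph $G=(V,E)$ and every ordered edge $(u,v)$ of $G$: $\mathrm{eb}^{(t)}(G,(u,v))=c$ if and only if $G\models\phi_c(u,v)$.
   Context: All graphs are finite, simple and undirected, without isolated vertices; $N(v)$ denotes the neighborhood of $v$. An ordered edge of $G=(V,E)$ is a pair $(u,v)$ with $\{u,v\}\in E$. EB-1WL coloring: $\mathrm{eb}^{(0)}(G,(u,v))=1$ for every ordered edge, and $\mathrm{eb}^{(\ell+1)}(G,(u,v)) = \big(\mathrm{eb}^{(\ell)}(G,(u,v)),\ \{\!\{\mathrm{eb}^{(\ell)}(G,(u,x)) : x\in N(u)\}\!\},\ \{\!\{(\mathrm{eb}^{(\ell)}(G,(u,y)),\mathrm{eb}^{(\ell)}(G,(v,y))) : y\in N(u)\cap N(v)\}\!\},\ \{\!\{\mathrm{eb}^{(\ell)}(G,(v,z)) : z\in N(v)\}\!\}\big)$. Logic: first-order logic over the vocabulary with one binary relation $E$, where $E(x,y)$ holds of $(u,v)$ iff $\{u,v\}$ is an edge. For a tuple $\bar x=(x_1,\dots,x_n)$ of distinct variables, $\mathrm{clique}(\bar x):=\bigwedge_{1\le i<j\le n}E(x_i,x_j)$ (empty conjunction = true). CFOC is the smallest set of formulas such that: (1) $\mathrm{clique}(\bar x)$ is in CFOC; (2) if $\phi(\bar x)\in$ CFOC then $\mathrm{clique}(\bar x)\wedge\neg\phi(\bar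 x)\in$ CFOC; (3) if $\phi(\bar x),\psi(\bar y)\in$ CFOC then $\mathrm{clique}(\bar z)\wedge(\phi(\bar x)\star\psi(\bar y))\in$ CFOC for $\star\in\{\wedge,\vee\}$, where $\bar z$ lists each variable of $\bar x$ and $\bar y$ exactly once; (4) if $\phi(\bar x,y)\in$ CFOC then $\mathrm{clique}(\bar x)\wedge\exists^{\ge k}y\,\phi(\bar x,y)\in$ CFOC for every integer $k\ge1$ ($\exists^{\ge k}$: at least $k$ witnesses). $\phi(\bar x)$ means the free variables of $\phi$ are exactly $\bar x$. $\mathrm{CFOC}^3$: CFOC formulas using at most three distinct variables. Quantifier depth is the maximal nesting depth of counting quantifiers. *)

(* Defs.v *)
From mathcomp Require Import all_boot.
Set Implicit Arguments.
Unset Strict Implicit.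
Unset Printing Implicit Defensive.

Definition is_graph (T : finType) (e : rel T) : Prop :=
  symmetric e /\ irreflexive e /\ (forall v : T, exists w : T, e v w).

(* Colours are encoded injectively as finite trees with nat labels.
   Multisets are encoded canonically as lists sorted by the injective
   code [pickle] (so two lists give the same sorted list iff they are
   permutations of each other, i.e. the same multiset). *)
Definition color := GenTree.tree nat.

Definition msort (s : seq color) : seq color :=
  sort (fun a b : color => pickle a <= pickle b) s.

Definition cpair (a b : color) : color := GenTree.Node 4 [:: a; b].

Fixpoint eb (T : finType) (e : rel T) (t : nat) (u v : T) : color :=
  match t with
  | 0 => GenTree.Node 0 [::]
  | t'.+1 =>
      GenTree.Node 1
        [:: eb e t' u v;
            GenTree.Node 2 (msort [seq eb e t' u x | x <- enum T & e u x]);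
            GenTree.Node 3 (msort [seq cpair (eb e t' u y) (eb e t' v y)
                                  | y <- enum T & e u y && e v y]);
            GenTree.Node 5 (msort [seq eb e t' v z | z <- enum T & e v z])]
  end.

Definition var := nat.

Inductive form : Type :=
  | FTrue : form
  | FE : var -> var -> form
  | FNeg : form -> form
  | FAnd : form -> form -> form
  | FOr : form -> form -> form
  | FEx : nat -> var -> form -> form.

Definition upd (T : Type) (rho : var -> T) (y : var) (w : T) : var -> T :=
  fun z => if z == y then w else rho z.

Fixpoint sat (T : finType) (e : rel T) (rho : var -> T) (f : form) : bool :=
  match f with
  | FTrue => true
  | FE x y => e (rho x) (rho y)
  | FNeg g => ~~ sat e rho g
  | FAnd g h => sat e rho g && sat e rho h
  | FOr g h => sat e rho g || sat e rho h
  | FEx k y g => k <= #|[pred w : T | sat e (upd rho y w) g]|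
  end.

Fixpoint vars (f : form) : seq var :=
  match f with
  | FTrue => [::]
  | FE x y => [:: x; y]
  | FNeg g => vars g
  | FAnd g h | FOr g h => vars g ++ vars h
  | FEx _ y g => y :: vars g
  end.

Fixpoint qdepth (f : form) : nat :=
  match f with
  | FTrue | FE _ _ => 0
  | FNeg g => qdepth g
  | FAnd g h | FOr g h => maxn (qdepth g) (qdepth h)
  | FEx _ _ g => (qdepth g).+1
  end.

Fixpoint clique (xs : seq var) : form :=
  match xs with
  | [::] => FTrue
  | x :: xs' => foldr (fun y acc => FAnd (FE x y) acc) (clique xs') xs'
  end.

(* CFOC f xs : f is a CFOC formula whose (declared) tuple of free
   variables is xs (a tuple of distinct variables).  The tuple is
   regarded up to reordering (rule cf_perm). *)
Inductive CFOC : form -> seq var -> Prop :=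
  | cf_clique xs : uniq xs -> CFOC (clique xs) xs
  | cf_neg f xs : CFOC f xs -> CFOC (FAnd (clique xs) (FNeg f)) xs
  | cf_and f xs g ys zs :
      CFOC f xs -> CFOC g ys -> uniq zs ->
      (forall z, (z \in zs) = (z \in xs) || (z \in ys)) ->
      CFOC (FAnd (clique zs) (FAnd f g)) zs
  | cf_or f xs g ys zs :
      CFOC f xs -> CFOC g ys -> uniq zs ->
      (forall z, (z \in zs) = (z \in xs) || (z \in ys)) ->
      CFOC (FAnd (clique zs) (FOr f g)) zs
  | cf_ex f xs y k :
      CFOC f (rcons xs y) -> 1 <= k ->
      CFOC (FAnd (clique xs) (FEx k y f)) xs
  | cf_perm f xs ys : CFOC f xs -> perm_eq xs ys -> CFOC f ys.

Definition CFOC3 (f : form) (xs : seq var) : Prop :=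
  CFOC f xs /\ size (undup (vars f)) <= 3.

(* Main.v *)
Require Import Defs.
From mathcomp Require Import all_boot.

Lemma msort_perm (l l0 : seq color) : (msort l = msort l0) <-> perm_eq l (msort l0).
Proof.
have tr : transitive (fun a b : color => pickle a <= pickle b).
  by move=> a b c; apply: leq_trans.
have asy : antisymmetric (fun a b : color => pickle a <= pickle b).
  by move=> a b /anti_leq /(pcan_inj (@pickleK _)).
have tot : total (fun a b : color => pickle a <= pickle b).
  by move=> a b; apply: leq_total.
split=> [<-|H].
  by rewrite perm_sym /msort perm_sort.
apply: (sorted_eq tr asy); rewrite /msort ?sort_sorted //.

apply: perm_trans H; exact/permPl/perm_sort.
Qed.

Lemma card_cnt (T : finType) (P : pred T) : #|[pred w | P w]| = count P (enum T).
Proof.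
rewrite cardE /enum_mem size_filter count_filter; apply: eq_count => w.
by rewrite /= andbT.
Qed.

Lemma cnt_map (T : finType) (R : pred T) (F : T -> color) (P : pred color) :
  #|[pred w | R w && P (F w)]| = count P [seq F w | w <- enum T & R w].
Proof.
rewrite card_cnt count_map count_filter; apply: eq_count => w.
by rewrite /= andbC.
Qed.

Lemma perm_undupE (l L : seq color) : perm_eq l L =
  all (fun d => count_mem d l == count_mem d L) (undup L) && all (fun c => c \in undup L) l.
Proof.
apply/idP/andP.
  move=> H; split.
    by apply/allP=> d _; rewrite (permP H).
  by apply/allP=> c; rewrite (perm_mem H) mem_undup.
case=> /allP H1 /allP H2; rewrite /perm_eq; apply/allP => c; rewrite mem_cat => /orP[] Hc.
  by apply: H1; apply: H2.
by apply: H1; rewrite mem_undup.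
Qed.

Definition and2 zs f g := FAnd (clique zs) (FAnd f g).
Definition fneg zs f := FAnd (clique zs) (FNeg f).
Definition fex zs k z f := FAnd (clique zs) (FEx k z f).

Definition inS (S : seq var) f := all (fun v => v \in S) (vars f).


Lemma qdepth_foldr a b s : qdepth (foldr (fun y acc => FAnd (FE a y) acc) b s) = qdepth b.
Proof. by elim: s => //= y s IH; rewrite max0n IH. Qed.

Lemma qdepth_clique zs : qdepth (clique zs) = 0.
Proof. by elim: zs => //= a zs IH; rewrite qdepth_foldr. Qed.

Lemma vars_foldr (P : pred var) a b s : P a -> all P s -> all P (vars b) ->
  all P (vars (foldr (fun y acc => FAnd (FE a y) acc) b s)).
Proof. by move=> Pa; elim: s => //= y s IH /andP[Py Ps] Pb; rewrite Pa Py IH. Qed.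

Lemma inS_clique S zs : {subset zs <= S} -> inS S (clique zs).
Proof.
elim: zs => //= a zs IH sub.
have sub' : {subset zs <= S} by move=> v vz; apply: sub; rewrite inE vz orbT.
apply: vars_foldr; first by apply: sub; rewrite inE eqxx.
  by apply/allP.
exact: IH.
Qed.

Lemma inS_and2 S zs f g : {subset zs <= S} -> inS S f -> inS S g -> inS S (and2 zs f g).
Proof. by move=> /inS_clique; rewrite /inS /= !all_cat => -> -> ->. Qed.
Lemma inS_neg S zs f : {subset zs <= S} -> inS S f -> inS S (fneg zs f).
Proof. by move=> /inS_clique; rewrite /inS /= !all_cat => -> ->. Qed.
Lemma inS_fex S zs k z f : {subset zs <= S} -> z \in S -> inS S f -> inS S (fex zs k z f).
Proof. by move=> /inS_clique; rewrite /inS /= !all_cat => -> /= -> ->. Qed.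

Lemma qd_and2 zs f g : qdepth (and2 zs f g) = maxn (qdepth f) (qdepth g).
Proof. by rewrite /= qdepth_clique max0n. Qed.
Lemma qd_neg zs f : qdepth (fneg zs f) = qdepth f.
Proof. by rewrite /= qdepth_clique max0n. Qed.
Lemma qd_fex zs k z f : qdepth (fex zs k z f) = (qdepth f).+1.
Proof. by rewrite /= qdepth_clique max0n. Qed.

Lemma cf_and2 f xs g zs : CFOC f xs -> CFOC g zs -> uniq zs -> {subset xs <= zs} ->
  CFOC (and2 zs f g) zs.
Proof.
move=> Hf Hg U sub; apply: (cf_and Hf Hg U) => v.
by case: (boolP (v \in xs)) => // /sub ->.
Qed.
Lemma cf_neg2 f zs : CFOC f zs -> CFOC (fneg zs f) zs.
Proof. exact: cf_neg. Qed.
Lemma cf_fex2 f zs z k : CFOC f (rcons zs z) -> 0 < k -> CFOC (fex zs k z f) zs.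
Proof. exact: cf_ex. Qed.

Lemma sat_and2 (T : finType) (e : rel T) rho zs f g :
  sat e rho (and2 zs f g) = [&& sat e rho (clique zs), sat e rho f & sat e rho g].
Proof. by []. Qed.
Lemma sat_neg (T : finType) (e : rel T) rho zs f :
  sat e rho (fneg zs f) = sat e rho (clique zs) && ~~ sat e rho f.
Proof. by []. Qed.
Lemma sat_fex (T : finType) (e : rel T) rho zs k z f :
  sat e rho (fex zs k z f) = sat e rho (clique zs) && (k <= #|[pred w | sat e (upd rho z w) f]|).
Proof. by []. Qed.

Lemma updE T (rho : var -> T) z w v : v != z -> upd rho z w v = rho v.
Proof. by rewrite /upd => /negbTE ->. Qed.
Lemma updZ T (rho : var -> T) z w : upd rho z w z = w.
Proof. by rewrite /upd eqxx. Qed.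

Ltac sp := repeat match goal with |- _ /\ _ => split end.

Lemma all_neq (c : color) D : all (fun d => c != d) D = (c \notin D).
Proof. by elim: D => //= d D ->; rewrite inE negb_or. Qed.

Lemma undup_nonnil (L : seq color) : L != [::] -> undup L != [::].
Proof.
case: L => //= a L _; case: ifP => // aL.
by apply/eqP => E; have := mem_undup L a; rewrite E aL.
Qed.

Lemma multi (t : nat) (x y z : var) (ws : seq var)
  (R : forall T : finType, rel T -> T -> T -> T -> bool)
  (F : forall T : finType, rel T -> T -> T -> T -> color) (L : seq color) :
  uniq (rcons ws z) -> {subset rcons ws z <= [:: x; y; z]} -> z != x -> z != y ->
  (forall (T : finType) (e : rel T), is_graph e -> forall u v, e u v ->
     forall rho : var -> T, rho x = u -> rho y = v -> sat e rho (clique ws)) ->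
  (forall (T : finType) (e : rel T), is_graph e -> forall u v, e u v ->
     forall rho : var -> T, rho x = u -> rho y = v ->
     forall w, sat e (upd rho z w) (clique (rcons ws z)) = R T e u v w) ->
  (forall d, d \in L -> exists psi, CFOC psi (rcons ws z) /\ inS [:: x; y; z] psi /\
     qdepth psi = t /\
     forall (T : finType) (e : rel T), is_graph e -> forall u v, e u v ->
     forall rho : var -> T, rho x = u -> rho y = v ->
     forall w, sat e (upd rho z w) psi = R T e u v w && (F T e u v w == d)) ->
  exists Phi, CFOC Phi ws /\ inS [:: x; y; z] Phi /\ qdepth Phi <= t.+1 /\
    (L != [::] -> qdepth Phi = t.+1) /\
    forall (T : finType) (e : rel T), is_graph e -> forall u v, e u v ->
     forall rho : var -> T, rho x = u -> rho y = v ->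
      (sat e rho Phi <-> perm_eq [seq F T e u v w | w <- enum T & R T e u v w] L).
Proof.
move=> Uzs subzs zx zy Hws Hzs Hpsi.
have Uws : uniq ws by move: Uzs; rewrite rcons_uniq => /andP[].
have subws : {subset ws <= [:: x; y; z]}.
  by move=> v vw; apply: subzs; rewrite mem_rcons inE vw orbT.
have srefl : forall s : seq var, {subset s <= s} by move=> s v.
have key : forall D : seq color, {subset D <= L} -> exists Psi Th,
  CFOC Psi ws /\ inS [:: x; y; z] Psi /\ qdepth Psi <= t.+1 /\
  (D != [::] -> qdepth Psi = t.+1) /\
  CFOC Th (rcons ws z) /\ inS [:: x; y; z] Th /\ qdepth Th <= t /\
  forall (T : finType) (e : rel T), is_graph e -> forall u v, e u v ->
     forall rho : var -> T, rho x = u -> rho y = v ->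
     sat e rho Psi = all (fun d => count_mem d [seq F T e u v w | w <- enum T & R T e u v w]
                                     == count_mem d L) D /\
     forall w, sat e (upd rho z w) Th = R T e u v w && all (fun d => F T e u v w != d) D.
  elim=> [|d D IH] subD.
    exists (clique ws), (clique (rcons ws z)); sp.
    - exact: cf_clique.
    - exact: inS_clique.
    - by rewrite qdepth_clique.
    - by [].
    - exact: (cf_clique Uzs).
    - exact: inS_clique.
    - by rewrite qdepth_clique.
    - move=> T e G u v uv rho rx ry; split; first by rewrite /=; apply: (Hws T e G u v uv rho rx ry).
      by move=> w; rewrite (Hzs T e G u v uv rho rx ry) andbT.
  have dL : d \in L by apply: subD; rewrite inE eqxx.
  have [|Psi [Th [cP [iP [dP1 [dP2 [cT [iT [dT sem]]]]]]]]] := IH.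
    by move=> c cD; apply: subD; rewrite inE cD orbT.
  have [psi [cpsi [ipsi [dpsi spsi]]]] := Hpsi d dL.
  have mpos : 0 < count_mem d L by rewrite -has_count has_pred1.
  set m := count_mem d L in mpos *.
  exists (and2 ws (and2 ws (fex ws m z psi) (fneg ws (fex ws m.+1 z psi))) Psi).
  exists (and2 (rcons ws z) (fneg (rcons ws z) psi) Th).
  sp.
  - apply: cf_and2 (srefl _) => //.
    apply: cf_and2 (srefl _) => //; first exact: cf_fex2.
    by apply: cf_neg2; apply: cf_fex2.
  - by apply: inS_and2 => //; apply: inS_and2 => //;
      [apply: inS_fex | apply: inS_neg => //; apply: inS_fex] => //; rewrite !inE eqxx ?orbT.
  - by rewrite !(qd_and2, qd_neg, qd_fex) dpsi maxnn geq_max leqnn.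
  - by move=> _; rewrite !(qd_and2, qd_neg, qd_fex) dpsi maxnn; apply/maxn_idPl.
  - apply: cf_and2 (srefl _) => //; exact: cf_neg2.
  - by apply: inS_and2 => //; apply: inS_neg.
  - by rewrite !(qd_and2, qd_neg) dpsi geq_max leqnn.
  - move=> T e G u v uv rho rx ry; split.
    have cnt : #|[pred w | sat e (upd rho z w) psi]| =
       count_mem d [seq F T e u v w | w <- enum T & R T e u v w].
      rewrite (@eq_card _ _ [pred w | R T e u v w && (F T e u v w == d)]).
        exact: (@cnt_map T (R T e u v) (F T e u v) (fun c => c == d)).
      by move=> w; rewrite !inE (spsi T e G u v uv rho rx ry).
    rewrite !(sat_and2, sat_neg, sat_fex) (Hws T e G u v uv rho rx ry) cnt /=.
    have [-> _] := sem T e G u v uv rho rx ry.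
    set cc := count_mem d _; rewrite -leqNgt eqn_leq.
    by case: (m <= cc); case: (cc <= m).
    move=> w.
    rewrite !(sat_and2, sat_neg) (Hzs T e G u v uv rho rx ry) (spsi T e G u v uv rho rx ry) /=.
    have [_ ->] := sem T e G u v uv rho rx ry.
    by case: (R T e u v w).
have [|Psi [Th [cP [iP [dP1 [dP2 [cT [iT [dT sem]]]]]]]]] := key (undup L).
  by move=> c; rewrite mem_undup.
exists (and2 ws Psi (fneg ws (fex ws 1 z Th))); sp.
- apply: cf_and2 (srefl _) => //; apply: cf_neg2; exact: cf_fex2.
- by apply: inS_and2 => //; apply: inS_neg => //; apply: inS_fex => //; rewrite !inE eqxx ?orbT.
- by rewrite !(qd_and2, qd_neg, qd_fex) geq_max dP1.
- move=> /undup_nonnil /dP2 dq; rewrite !(qd_and2, qd_neg, qd_fex) dq; apply/maxn_idPl.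
  by [].
- move=> T e G u v uv rho rx ry.
  have [s1 s2] := sem T e G u v uv rho rx ry.
  have cnt : #|[pred w | sat e (upd rho z w) Th]| =
       count (fun c => c \notin undup L) [seq F T e u v w | w <- enum T & R T e u v w].
    rewrite (@eq_card _ _ [pred w | R T e u v w && (F T e u v w \notin undup L)]).
      exact: (@cnt_map T (R T e u v) (F T e u v) (fun c => c \notin undup L)).
    by move=> w; rewrite !inE s2 all_neq.
  rewrite !(sat_and2, sat_neg, sat_fex) (Hws T e G u v uv rho rx ry) cnt s1 /=.
  rewrite -has_count -all_predC perm_undupE.
  suff -> : all (predC (fun c => c \notin undup L)) [seq F T e u v w | w <- enum T & R T e u v w]
     = all (fun c => c \in undup L) [seq F T e u v w | w <- enum T & R T e u v w] by [].
  by apply: eq_all => c /=; rewrite negbK.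
Qed.

Definition realized t c := exists (T0 : finType) (e0 : rel T0) (u0 v0 : T0),
  is_graph e0 /\ e0 u0 v0 /\ eb e0 t u0 v0 = c.

Lemma iffE (a d : color) (b : bool) : (a = d <-> b) -> b = (a == d).
Proof. by case: b => -[H1 H2]; apply/esym/eqP; [apply: H2 | move/H1]. Qed.

Lemma inS_sub S S' f : {subset S <= S'} -> inS S f -> inS S' f.
Proof. by move=> sub; apply: sub_all => v /sub. Qed.

Lemma clique2 (T : finType) (e : rel T) rho a b :
  sat e rho (clique [:: a; b]) = e (rho a) (rho b).
Proof. by rewrite /= andbT. Qed.

Lemma clique3 (T : finType) (e : rel T) rho a b c :
  sat e rho (clique [:: a; b; c]) = [&& e (rho a) (rho b), e (rho a) (rho c) & e (rho b) (rho c)].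
Proof. by rewrite /= andbT. Qed.

Lemma cpair_eq a b a' b' : (cpair a b == cpair a' b') = (a == a') && (b == b').
Proof.
apply/eqP/andP => [[-> ->]|[/eqP -> /eqP ->]] //.
Qed.

Lemma node_eq (a a' : color) b b' c c' d d' :
  GenTree.Node 1 [:: a; GenTree.Node 2 b; GenTree.Node 3 c; GenTree.Node 5 d] =
  GenTree.Node 1 [:: a'; GenTree.Node 2 b'; GenTree.Node 3 c'; GenTree.Node 5 d'] <->
  [/\ a = a', b = b', c = c' & d = d'].
Proof. by split; [case=> -> -> -> -> | case=> -> -> -> ->]. Qed.

Definition Good t c x y z := exists phi, CFOC phi [:: x; y] /\ inS [:: x; y; z] phi /\
  qdepth phi = t /\
  forall (T : finType) (e : rel T), is_graph e -> forall u v, e u v ->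
    forall rho : var -> T, rho x = u -> rho y = v -> (eb e t u v = c <-> sat e rho phi).

Lemma strong t : forall c, realized t c -> forall x y z, x != y -> x != z -> y != z ->
  Good t c x y z.
Proof.
elim: t => [|t IH] c [T0 [e0 [u0 [v0 [G0 [uv0 <-]]]]]] x y z xy xz yz.
  exists (clique [:: x; y]); split; first by apply: cf_clique; rewrite /= inE xy.
  split; first by apply: inS_clique => v; rewrite !inE => /orP[] ->; rewrite ?orbT.
  split; first by rewrite qdepth_clique.
  by move=> T e G u v uv rho rx ry; rewrite clique2 rx ry uv.
have zx : z != x by rewrite eq_sym.
have zy : z != y by rewrite eq_sym.
have yx : y != x by rewrite eq_sym.
have srefl : forall s : seq var, {subset s <= s} by move=> s v.
have [phi0 [c0 [i0 [d0 s0]]]] := IH (eb e0 t u0 v0) (ex_intro _ T0 (ex_intro _ e0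
   (ex_intro _ u0 (ex_intro _ v0 (conj G0 (conj uv0 erefl)))))) x y z xy xz yz.
set L1 := msort [seq eb e0 t u0 w | w <- enum T0 & e0 u0 w].
have HM1 := @multi t x y z [:: x]
  (fun T e u v w => e u w) (fun T e u v w => eb e t u w) L1.
edestruct HM1 as [P1 [cp1 [ip1 [dp1 [dp1' sp1]]]]].
- by rewrite /= inE xz.
- by move=> v; rewrite !inE => /orP[] ->; rewrite ?orbT.
- by [].
- by [].
- by [].
- by move=> T e G u v uv rho rx ry w; rewrite clique2 updE // updZ rx.
- move=> d; rewrite mem_sort => /mapP [w0]; rewrite mem_filter => /andP [uw0 _] ->.
  have [phi [cf [iphi [dphi sphi]]]] := IH (eb e0 t u0 w0) (ex_intro _ T0 (ex_intro _ e0
   (ex_intro _ u0 (ex_intro _ w0 (conj G0 (conj uw0 erefl)))))) x z y xz xy zy.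
  exists (and2 [:: x; z] (clique [:: x; z]) phi); split.
    by apply: cf_and2 (srefl _) => //; [apply: cf_clique | ]; rewrite /= inE xz.
  split.
    apply: inS_and2; first by move=> v; rewrite !inE => /orP[] ->; rewrite ?orbT.
      by apply: inS_clique => v; rewrite !inE => /orP[] ->; rewrite ?orbT.
    by apply: inS_sub iphi => v; rewrite !inE => /or3P[] ->; rewrite ?orbT.
  split; first by rewrite qd_and2 qdepth_clique max0n.
  move=> T e G u v uv rho rx ry w; rewrite sat_and2 clique2 updE // updZ rx.
  case uw: (e u w) => //=.
  apply: iffE; apply: sphi => //; [by rewrite updE // rx | by rewrite updZ].
set L3 := msort [seq eb e0 t v0 w | w <- enum T0 & e0 v0 w].
have HM3 := @multi t x y z [:: y]
  (fun T e u v w => e v w) (fun T e u v w => eb e t v w) L3.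
edestruct HM3 as [P3 [cp3 [ip3 [dp3 [_ sp3]]]]].
- by rewrite /= inE yz.
- by move=> v; rewrite !inE => /orP[] ->; rewrite ?orbT.
- by [].
- by [].
- by [].
- by move=> T e G u v uv rho rx ry w; rewrite clique2 updE // updZ ry.
- move=> d; rewrite mem_sort => /mapP [w0]; rewrite mem_filter => /andP [vw0 _] ->.
  have [phi [cf [iphi [dphi sphi]]]] := IH (eb e0 t v0 w0) (ex_intro _ T0 (ex_intro _ e0
   (ex_intro _ v0 (ex_intro _ w0 (conj G0 (conj vw0 erefl)))))) y z x yz yx zx.
  exists (and2 [:: y; z] (clique [:: y; z]) phi); split.
    by apply: cf_and2 (srefl _) => //; [apply: cf_clique | ]; rewrite /= inE yz.
  split.
    apply: inS_and2; first by move=> v; rewrite !inE => /orP[] ->; rewrite ?orbT.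
      by apply: inS_clique => v; rewrite !inE => /orP[] ->; rewrite ?orbT.
    by apply: inS_sub iphi => v; rewrite !inE => /or3P[] ->; rewrite ?orbT.
  split; first by rewrite qd_and2 qdepth_clique max0n.
  move=> T e G u v uv rho rx ry w; rewrite sat_and2 clique2 updE // updZ ry.
  case vw: (e v w) => //=.
  apply: iffE; apply: sphi => //; [by rewrite updE // ry | by rewrite updZ].
set L2 := msort [seq cpair (eb e0 t u0 w) (eb e0 t v0 w) | w <- enum T0 & e0 u0 w && e0 v0 w].
have HM2 := @multi t x y z [:: x; y]
  (fun T e u v w => e u w && e v w)
  (fun T e u v w => cpair (eb e t u w) (eb e t v w)) L2.
edestruct HM2 as [P2 [cp2 [ip2 [dp2 [_ sp2]]]]].
- by rewrite /= !inE negb_or xy xz yz.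
- by [].
- by [].
- by [].
- by move=> T e G u v uv rho rx ry; rewrite clique2 rx ry.
- by move=> T e G u v uv rho rx ry w; rewrite clique3 updZ !updE // rx ry uv.
- move=> d; rewrite mem_sort => /mapP [w0]; rewrite mem_filter => /andP [/andP [uw0 vw0] _] ->.
  have [pa [ca [ia [da sa]]]] := IH (eb e0 t u0 w0) (ex_intro _ T0 (ex_intro _ e0
   (ex_intro _ u0 (ex_intro _ w0 (conj G0 (conj uw0 erefl)))))) x z y xz xy zy.
  have [pb [cb [ib [db sb]]]] := IH (eb e0 t v0 w0) (ex_intro _ T0 (ex_intro _ e0
   (ex_intro _ v0 (ex_intro _ w0 (conj G0 (conj vw0 erefl)))))) y z x yz yx zx.
  exists (FAnd (clique [:: x; y; z]) (FAnd pa pb)); split.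
    apply: (cf_and ca cb); first by rewrite /= !inE negb_or xy xz yz.
    by move=> v; rewrite !inE; case: (v == x); case: (v == y); case: (v == z).
  split.
    apply: (@inS_and2 _ [:: x; y; z] pa pb (srefl _));
      [apply: inS_sub ia | apply: inS_sub ib] => v; rewrite !inE => /or3P[] ->; rewrite ?orbT //.
  split; first by rewrite /= da db !maxnn max0n.
  move=> T e G u v uv rho rx ry w.
  rewrite (@sat_and2 T e (upd rho z w) [:: x; y; z] pa pb) clique3 updZ !updE // rx ry uv.
  rewrite cpair_eq /=.
  case uw: (e u w) => //=; case vw: (e v w) => //=.
  have hx : upd rho z w x = u by rewrite updE // rx.
  have hy : upd rho z w y = v by rewrite updE // ry.
  have hz : upd rho z w z = w by rewrite updZ.
  rewrite (@iffE _ _ _ (sa T e G u w uw (upd rho z w) hx hz)).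
  by rewrite (@iffE _ _ _ (sb T e G v w vw (upd rho z w) hy hz)).
have L1n : L1 != [::].
  have : eb e0 t u0 v0 \in L1.
    by rewrite mem_sort; apply: map_f; rewrite mem_filter uv0 mem_enum.
  by case: (L1).
have Uxy : uniq [:: x; y] by rewrite /= inE xy.
have c32 : CFOC (and2 [:: x; y] P3 P2) [:: x; y].
  by apply: (@cf_and2 _ _ _ _ cp3 cp2 Uxy) => v; rewrite !inE => ->; rewrite orbT.
have c132 : CFOC (and2 [:: x; y] P1 (and2 [:: x; y] P3 P2)) [:: x; y].
  by apply: (@cf_and2 _ _ _ _ cp1 c32 Uxy) => v; rewrite !inE => ->.
exists (and2 [:: x; y] phi0 (and2 [:: x; y] P1 (and2 [:: x; y] P3 P2))); split.
  exact: (@cf_and2 _ _ _ _ c0 c132 Uxy (srefl _)).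
split.
  have sxy : {subset [:: x; y] <= [:: x; y; z]}.
    by move=> v; rewrite !inE => /orP[] ->; rewrite ?orbT.
  by do !apply: inS_and2 => //.
split.
  rewrite !qd_and2 (dp1' L1n) d0.
  have -> : maxn t.+1 (maxn (qdepth P3) (qdepth P2)) = t.+1 by apply/maxn_idPl; rewrite geq_max dp2 dp3.
  by apply/maxn_idPr.
move=> T e G u v uv rho rx ry.
have msE : forall l l0 : seq color, perm_eq l (msort l0) = (msort l == msort l0).
  by move=> l l0; apply/idP/eqP => /msort_perm.
have h0 := @iffE _ _ _ (s0 T e G u v uv rho rx ry).
have h1 : sat e rho P1 = perm_eq [seq eb e t u w | w <- enum T & e u w] L1.
  by apply/idP/idP => /(sp1 T e G u v uv rho rx ry).
have h2 : sat e rho P2 = perm_eq [seq cpair (eb e t u w) (eb e t v w) | w <- enum T & e u w && e v w] L2.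
  by apply/idP/idP => /(sp2 T e G u v uv rho rx ry).
have h3 : sat e rho P3 = perm_eq [seq eb e t v w | w <- enum T & e v w] L3.
  by apply/idP/idP => /(sp3 T e G u v uv rho rx ry).
rewrite !sat_and2 clique2 rx ry uv h0 h1 h2 h3 !msE /=.
split.
  by move/node_eq => [-> -> -> ->]; rewrite !eqxx.
by case/and4P => /eqP -> /eqP -> /eqP -> /eqP ->.
Qed.

Theorem mainTheorem6 :
  forall (t : nat) (c : color),
    (exists (T0 : finType) (e0 : rel T0) (u0 v0 : T0),
        is_graph e0 /\ e0 u0 v0 /\ eb e0 t u0 v0 = c) ->
    exists (phi : form) (x y : var),
      x != y /\ CFOC3 phi [:: x; y] /\ qdepth phi = t /\
      forall (T : finType) (e : rel T), is_graph e ->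
        forall (u v : T), e u v ->
          forall rho : var -> T, rho x = u -> rho y = v ->
            (eb e t u v = c <-> sat e rho phi).
Proof.
move=> t c H.
have [phi [cf [iphi [dphi sphi]]]] := @strong t c H 0 1 2 isT isT isT.
exists phi, 0, 1; split => //; split => //; split => //.
apply: (@leq_trans (size [:: 0; 1; 2])) => //.
apply: uniq_leq_size; first exact: undup_uniq.
by move=> v; rewrite mem_undup => /(allP iphi).
Qed.
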